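(* Consider a uniprocessor system of periodic tasks scheduled by a preemptive fixed-priority scheduler. Let $\tau_v$ be a task (the victim control task) and let $hp(\tau_v)$ be the set of tasks with priority higher than $\tau_v$. Each task $\tau_i \in hp(\tau_v)$ has period $T_i>0$ and worst-case execution time $C_i$ with $0 < C_i \le T_i$, and its jobs are released at times $j\cdot T_i$ for integers $j \ge 0$. Let the $k$-th job of $\tau_v$ be released at time $r'_{v,k} = r_{v,k} + \delta \ge 0$, where $r_{v,k}$ is its nominal release time and $\delta \ge 0$ its release delay. A job of $\tau_i\in hp(\tau_v)$ with index $j$ is called a carry-in job for this victim job if $j\cdot T_i < r'_{v,k}$ and $j\cdot T_i + C_i > r'_{v,k}$, and the carry-in interference $I(k)$ is the total amount $\sum_{\tau_i \in hp(\tau_v)} C_i \cdot \#\{\text{carry-in jobs of } \tau_i\}$. Then $$I(k) = \sum_{\tau_i \in hp(\tau_v)} \max\!\left(0,\ \left\lceil \frac{r'_{v,k}}{T_i}\right\rceil - \left\lfloor \frac{r'_{v,k} - C_i}{T_i}\right\rfloor - 1\right) C_i .$$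
   Context: Preemptive fixed-priority (PFP) scheduling on a single core: at each instant the highest-priority released, unfinished job executes. Each job of a task $\tau_i$ is charged at most its worst-case execution time $C_i$ of interference. $\lceil\cdot\rceil$ and $\lfloor\cdot\rfloor$ denote ceiling and floor. *)

(* Defs.v *)
From mathcomp Require Import all_boot all_order all_algebra.
Set Implicit Arguments. Unset Strict Implicit. Unset Printing Implicit Defensive.
Import Order.TTheory GRing.Theory Num.Theory.
Local Open Scope ring_scope.

Definition carry_in {R : archiRealFieldType} (T C r : R) (j : nat) : bool :=
  (j%:R * T < r) && (r < j%:R * T + C).

(* Number of carry-in jobs among all indices j >= 0.  Any carry-in job
   satisfies j*T < r, hence j < r/T <= truncn (r/T) + 1 when T > 0 and r >= 0,
   so counting over the indices 0 .. truncn (r/T) covers all j >= 0. *)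
Definition n_carry_in {R : archiRealFieldType} (T C r : R) : nat :=
  count (carry_in T C r) (iota 0 (Num.truncn (r / T)).+1).

Definition carry_in_interference {R : archiRealFieldType} {hp : finType}
  (T C : hp -> R) (r : R) : R :=
  \sum_(i : hp) C i * (n_carry_in (T i) (C i) r)%:R.

(* Main.v *)
Require Import Defs.
From mathcomp Require Import all_boot all_order all_algebra.
From mathcomp Require Import lra zify.
Import Order.TTheory GRing.Theory Num.Theory.
Local Open Scope ring_scope.

Lemma term (R : archiRealFieldType) (T C r : R) (hT : 0 < T) (hC : 0 < C)
  (hCT : C <= T) (hr : 0 <= r) :
  (n_carry_in T C r)%:Z =
  Num.max 0 (Num.ceil (r / T) - Num.floor ((r - C) / T) - 1).
Proof.
set x := r / T; set a := (r - C) / T; set y := C / T.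
have ha : a = x - y by rewrite /a /x /y mulrBl.
have hy1 : y <= 1 by rewrite /y ler_pdivrMr // mul1r.
have hy0 : 0 < y by rewrite /y divr_gt0.
have hx0 : 0 <= x by rewrite /x divr_ge0 // ltW.
have hcar : forall j : nat, carry_in T C r j = (j%:R < x) && (a < j%:R).
  move=> j; rewrite /carry_in /x /a ltr_pdivlMr // ltr_pdivrMr //.
  congr (_ && _); apply/idP/idP => H; lra.
have hfa : -1 <= Num.floor a by rewrite floor_ge_int; lra.
set m := Num.floor a + 1.
have hm0 : 0 <= m by rewrite /m; lia.
have [n0 hn0] : exists n0 : nat, m = n0%:Z by exists `|m|%N; rewrite gez0_abs.
have hma : a < m%:~R by rewrite /m floorD1_gt.
have hmle : (m - 1)%:~R <= a by rewrite /m addrK floor_le.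
have key : forall j : nat, carry_in T C r j = (j == n0) && (n0%:R < x).
  move=> j; rewrite hcar.
  have E : (a < j%:R) = (n0 <= j)%N.
    rewrite -[j%:R]/((j%:Z)%:~R : R) -floor_lt_int.
    move: hn0; rewrite /m => hn0; move: (Num.floor a) hn0 => f hn0; apply/idP/idP => H; lia.
  rewrite E.
  case: (eqVneq j n0) => [->|hne] /=; first by rewrite leqnn andbT.
  case: leqP => hj /=; last by rewrite andbF.
  apply/negbTE/negP => hjx.
  have hj1 : ((m + 1)%:~R : R) <= j%:R.
    rewrite -[j%:R]/((j%:Z)%:~R : R) ler_int hn0; lia.
  move: hj1; rewrite intrD => hj1; lra.
have hfl : Num.floor a = m - 1 by rewrite /m addrK.
rewrite hfl /n_carry_in (eq_count key).
have hxm : x <= (m + 1)%:~R by rewrite intrD; lra.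
case: (ltrP (n0%:R : R) x) => hnx.
  have hc : Num.ceil x = m + 1.
    by apply/eqP; rewrite ceil_eq addrK hxm andbT hn0.
  rewrite hc.
  have -> : count (fun j => (j == n0) && true) (iota 0 (Num.truncn x).+1)
          = count (pred1 n0) (iota 0 (Num.truncn x).+1)
    by apply: eq_count => j; rewrite andbT.
  rewrite count_uniq_mem ?iota_uniq // mem_iota /= add0n ltnS truncn_ge_nat //
    (ltW hnx).
  have -> : m + 1 - (m - 1) - 1 = 1 by lia.
  by [].
have hc : Num.ceil x <= m by rewrite ceil_le_int hn0.
rewrite (eq_count (a2 := pred0)) ?count_pred0; last by move=> j; rewrite andbF.
apply/esym/max_idPl; lia.
Qed.

Theorem lemma1 (R : archiRealFieldType) (hp : finType) (T C : hp -> R)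
  (r_nom delta : R)
  (hT : forall i, 0 < T i) (hC0 : forall i, 0 < C i) (hCT : forall i, C i <= T i)
  (hdelta : 0 <= delta) (hr : 0 <= r_nom + delta) :
  carry_in_interference T C (r_nom + delta) =
  \sum_(i : hp)
     (Num.max 0 (Num.ceil ((r_nom + delta) / T i)
                 - Num.floor ((r_nom + delta - C i) / T i) - 1))%:~R * C i.
Proof.
rewrite /carry_in_interference; apply: eq_bigr => i _.
by rewrite -term // mulrC.
Qed.
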